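(* Let $t\in\mathbb{N}_0$ and $d\ge t$. Suppose real numbers $\alpha_\pi$, indexed by the partitions $\pi$ of $t$, satisfy $$\mu_{1,d}(M_1,\dots,M_t)=\sum_{\pi\in\mathscr{P}_t}\alpha_\pi\sum_{s\in S_t,\ s\sim\pi}\ \prod_{c\in s}\operatorname{trace}(M_c)\qquad\text{for all }M_1,\dots,M_t\in\mathscr{H}_d.$$ Then $\alpha_\pi>0$ for every $\pi\in\mathscr{P}_t$.
   Context: $\mathscr{H}_d$ denotes the real symmetric $d\times d$ matrices with $\langle A,B\rangle=\operatorname{trace}(AB)$. $\mathcal{G}_{1,d}$ is the set of rank-one orthogonal projections in $\mathscr{H}_d$, with orthogonally invariant Borel probability measure $\sigma_{1,d}$, and $\mu_{1,d}(M_1,\dots,M_t):=\int_{\mathcal{G}_{1,d}}\langle P,M_1\rangle\cdots\langle P,M_t\rangle\,d\sigma_{1,d}(P)$. $\mathscr{P}_t$ is the set of partitions of $t$ (nonincreasing nonnegative integer vectors $(\pi_1,\dots,\pi_t)$ summing to $t$). $S_t$ is the permutation group of $\{1,\dots,t\}$; each $s\in S_t$ is written as a product of disjoint cycles (fixed points being cycles of length one), $c\in s$ means $c$ is one of these cycles, and $s\sim\pi$ means the cycle lengths of $s$, in nonincreasing order, are the nonzero entries of $\pi$. For a cycle $c=(c_1\,c_2\,\ldots\,c_l)$, $M_c:=M_{c_1}M_{c_2}\cdots M_{c_l}$. *)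

(* Defs.v *)
From HB Require Import structures.
From mathcomp Require Import all_boot all_order all_algebra all_fingroup.
From mathcomp Require Import all_classical all_reals all_analysis.

Set Implicit Arguments.
Unset Strict Implicit.
Unset Printing Implicit Defensive.
Import Order.TTheory GRing.Theory Num.Theory.
Local Open Scope classical_set_scope.
Local Open Scope ring_scope.

Definition symmetric_mx (R : realType) (d : nat) (M : 'M[R]_d) : Prop :=
  M^T = M.

Definition hs_inner (R : realType) (d : nat) (A B : 'M[R]_d) : R := \tr (A *m B).

Definition Grass1 (R : realType) (d : nat) : set 'M[R]_d :=
  [set P | P^T = P /\ P *m P = P /\ \rank P = 1%N].

(* Borel sigma-algebra on 'M[R]_d ~ R^{d x d}: generated by the preimages of
   Borel sets of R under the entry maps. *)
(* carrier alias of 'M[R]_d, pointed at 0 (needed to build a measurable type) *)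
Definition mxT (R : realType) (d : nat) : Type := 'M[R]_d.
HB.instance Definition _ (R : realType) (d : nat) := Choice.on (mxT R d).
HB.instance Definition _ (R : realType) (d : nat) :=
  isPointed.Build (mxT R d) (0 : 'M[R]_d).

Definition mx_entry_gen (R : realType) (d : nat) : set (set (mxT R d)) :=
  [set X | exists (i j : 'I_d) (A : set R), measurable A /\
             X = (fun M : 'M[R]_d => M i j) @^-1` A].

Notation MxSpace R d := (g_sigma_algebraType (@mx_entry_gen R d)).

Definition orth_invariant (R : realType) (d : nat)
    (P : set (MxSpace R d) -> \bar R) : Prop :=
  forall U : 'M[R]_d, U^T *m U = 1%:M ->
  forall A : set (MxSpace R d), measurable A ->
    P ((fun X : 'M[R]_d => U *m X *m U^T) @^-1` A) = P A.

(* Partitions of t: nonincreasing vectors (pi_1,...,pi_t) of naturals summing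
   to t; entries are <= t, so we store them in 'I_t.+1 to get a finType. *)
Definition is_partn (t : nat) (x : t.-tuple 'I_t.+1) : bool :=
  sorted geq [seq val i | i <- x] && (sumn [seq val i | i <- x] == t).

Definition partition_of (t : nat) := {x : t.-tuple 'I_t.+1 | is_partn x}.

Definition partn_seq (t : nat) (p : partition_of t) : seq nat :=
  [seq val i | i <- val p].

Definition cycle_lengths (t : nat) (s : 'S_t) : seq nat :=
  sort geq [seq #|C| | C : {set 'I_t} in porbits s].

Definition cycle_type_is (t : nat) (s : 'S_t) (p : partition_of t) : bool :=
  [seq k <- partn_seq p | k != 0%N] == cycle_lengths s.

(* M_c = M_{c_1} M_{c_2} ... M_{c_l} for the cycle c = (c_1 c_2 ... c_l) of s
   with orbit C, where c_{k+1} = s^k c_1, c_1 some element of C. *)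
Definition cycle_mx (R : realType) (d t : nat) (M : 'I_t -> 'M[R]_d)
    (s : 'S_t) (C : {set 'I_t}) : 'M[R]_d :=
  match [pick x in C] with
  | Some x => \prod_(k < #|C|) M ((s ^+ k)%g x)
  | None => 1%:M
  end.

Definition mu1 (R : realType) (d t : nat) (P : set (MxSpace R d) -> \bar R)
    (M : 'I_t -> 'M[R]_d) : \bar R :=
  (\int[P]_(X in @Grass1 R d) (\prod_(i < t) hs_inner X (M i))%:E)%E.

(* Main.v *)
Require Import Defs.
From HB Require Import structures.
From mathcomp Require Import all_boot all_order all_algebra all_fingroup.
From mathcomp Require Import all_classical all_reals all_analysis.
From mathcomp Require Import zify.
Import Order.TTheory GRing.Theory Num.Theory.
Set Implicit Arguments. Unset Strict Implicit. Unset Printing Implicit Defensive.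

Fixpoint cyc (L : seq nat) (i : nat) : nat :=
  match L with
  | [::] => i
  | l :: L' => if i < l then (if i.+1 < l then i.+1 else 0) else l + cyc L' (i - l)
  end.

Fixpoint blk (L : seq nat) (i : nat) : nat :=
  match L with
  | [::] => 0
  | l :: L' => if i < l then 0 else (blk L' (i - l)).+1
  end.

Lemma cyc_lt L i : i < sumn L -> cyc L i < sumn L.
Proof.
elim: L i => [//|l L IH] i /=; case: (ltnP i l) => il.
  case: (ltnP i.+1 l) => i1l _; lia.
move=> h; have := IH (i - l); lia.
Qed.

Lemma cyc_inj L i j : i < sumn L -> j < sumn L -> cyc L i = cyc L j -> i = j.
Proof.
elim: L i j => [//|l L IH] i j /= hi hj.
case: (ltnP i l) => il; case: (ltnP j l) => jl.
- case: (ltnP i.+1 l) => i1; case: (ltnP j.+1 l) => j1; lia.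
- case: (ltnP i.+1 l) => i1 e; lia.
- case: (ltnP j.+1 l) => j1 e; lia.
- move/addnI/IH => h.
  have : i - l = j - l by apply: h; lia.
  lia.
Qed.

Lemma blk_cyc L i : i < sumn L -> blk L (cyc L i) = blk L i.
Proof.
elim: L i => [//|l L IH] i /= hi; case: (ltnP i l) => il.
  by case: (ltnP i.+1 l) => i1; [rewrite i1 | rewrite (leq_ltn_trans _ il)].
have -> : (l + cyc L (i - l) < l) = false by lia.
by rewrite addKn IH //; lia.
Qed.

Lemma blk_lt L i : i < sumn L -> blk L i < size L.
Proof.
elim: L i => [//|l L IH] i /= hi; case: (ltnP i l) => il //.
rewrite ltnS IH //; lia.
Qed.

Lemma iter_first l L i m : i + m < l -> iter m (cyc (l :: L)) i = i + m.
Proof.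
elim: m => [|m IH] h /=; first by rewrite addn0.
rewrite IH; last lia.
have -> : i + m < l by lia.
have -> : (i + m).+1 < l by lia.
lia.
Qed.

Lemma iter_shift l L x m : iter m (cyc (l :: L)) (l + x) = l + iter m (cyc L) x.
Proof.
elim: m => [//|m IH] /=; rewrite IH /=.
have -> : (l + iter m (cyc L) x < l) = false by lia.
by rewrite addKn.
Qed.

Lemma blk_conn L i j : i < sumn L -> j < sumn L -> blk L i = blk L j ->
  exists m, iter m (cyc L) i = j.
Proof.
elim: L i j => [//|l L IH] i j /= hi hj.
case: (ltnP i l) => il; case: (ltnP j l) => jl.
- move=> _; exists (j + (l - i).-1.+1); rewrite iterD /=.
  rewrite (@iter_first l L i (l - i).-1); last lia.
  have -> : i + (l - i).-1 < l by lia.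
  have -> : (i + (l - i).-1).+1 < l = false by lia.
  have -> : j = 0 + j by [].
  rewrite iter_first; [by [] | lia].
- by [].
- by [].
- case=> /IH [||m hm]; try lia.
  exists m; have -> : i = l + (i - l) by lia.
  rewrite iter_shift hm; lia.
Qed.

Lemma count_cst T (b : bool) (s : seq T) : count (fun _ => b) s = b * size s.
Proof. case: b; elim: s => [|x s IH] //=; rewrite IH /=; lia. Qed.

Lemma count_blk L k :
  count (fun j => blk L j == k) (iota 0 (sumn L)) = nth 0 L k.
Proof.
elim: L k => [|l L IH] k /=; first by rewrite nth_nil.
rewrite iotaD count_cat add0n.
have -> : count (fun j => blk (l :: L) j == k) (iota 0 l) = (k == 0) * l.
  rewrite (@eq_in_count _ _ (fun _ => k == 0)); last first.
    by move=> j; rewrite mem_iota /= => h; rewrite h eq_sym.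
  by rewrite count_cst size_iota.
rewrite -(addn0 l) iotaDl count_map addn0.
case: k => [|k] /=.
  rewrite (@eq_count _ _ (fun _ => false)) ?count_cst ?addn0 ?mul1n //.
  by move=> j /=; have -> : (l + j < l) = false by lia.
rewrite (@eq_count _ _ (fun j => blk L j == k)) ?IH //.
move=> j /=; have -> : (l + j < l) = false by lia.
by rewrite addKn.
Qed.


Lemma card_ordP t (P : pred nat) : #|[set j : 'I_t | P j]| = count P (iota 0 t).
Proof.
rewrite -val_enum_ord count_map cardE.
rewrite /enum_mem size_filter /= filter_predT.
by apply: eq_count => j; rewrite /= inE.
Qed.

Section CycPerm.
Variables (t : nat) (L : seq nat).
Hypothesis hL : sumn L = t.
Hypothesis hpos : all (fun l => 0 < l) L.

Definition cycf (i : 'I_t) : 'I_t := insubd i (cyc L i).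

Lemma val_cycf i : val (cycf i) = cyc L i.
Proof. by rewrite val_insubd -{2}hL cyc_lt // hL. Qed.

Lemma cycf_inj : injective cycf.
Proof.
move=> i j /(congr1 val); rewrite !val_cycf => /cyc_inj h; apply: val_inj.
by apply: h; rewrite hL.
Qed.

Definition cycp : 'S_t := perm cycf_inj.

Lemma cycp_exp m i : val ((cycp ^+ m)%g i) = iter m (cyc L) i.
Proof.
elim: m => [|m IH]; first by rewrite expg0 perm1.
by rewrite expgSr permM permE val_cycf IH.
Qed.

Lemma iter_lt m i : i < t -> iter m (cyc L) i < t.
Proof. rewrite -hL; elim: m => [//|m IH] /= h; exact: cyc_lt (IH h). Qed.

Lemma blk_iter m i : i < t -> blk L (iter m (cyc L) i) = blk L i.
Proof.
elim: m => [//|m IH] h /=; rewrite blk_cyc ?IH // hL; exact: iter_lt.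
Qed.

Definition Bk (k : nat) : {set 'I_t} := [set j : 'I_t | blk L j == k].

Lemma porbit_cycp i : porbit cycp i = Bk (blk L i).
Proof.
apply/setP => j; rewrite inE; apply/porbitP/eqP.
  by move=> [m ->]; rewrite cycp_exp blk_iter.
move/esym/(@blk_conn L i j); rewrite hL => /(_ (ltn_ord i) (ltn_ord j)) [m hm].
by exists m; apply: val_inj; rewrite cycp_exp.
Qed.

Lemma card_Bk k : #|Bk k| = nth 0 L k.
Proof. by rewrite /Bk (@card_ordP t (fun j => blk L j == k)) -hL count_blk. Qed.

Lemma Bk_inj : {in gtn (size L) &, injective Bk}.
Proof.
move=> k k' hk hk' e.
have : 0 < #|Bk k|.
  by rewrite card_Bk; apply: (allP hpos); apply: mem_nth.
rewrite card_gt0 => /set0Pn [j] jk.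
by move: (jk); rewrite {1}e !inE => /eqP <-; move: jk; rewrite inE => /eqP.
Qed.

Lemma Bk_ne k : k < size L -> exists j : 'I_t, blk L j = k.
Proof.
move=> hk; have : 0 < #|Bk k|.
  by rewrite card_Bk; apply: (allP hpos); apply: mem_nth.
by rewrite card_gt0 => /set0Pn [j]; rewrite inE => /eqP; exists j.
Qed.

Lemma cycp_type : perm_eq [seq #|C| | C : {set 'I_t} in porbits cycp] L.
Proof.
have pe : perm_eq (enum (porbits cycp)) [seq Bk k | k <- iota 0 (size L)].
  apply: uniq_perm; first exact: enum_uniq.
    rewrite map_inj_in_uniq ?iota_uniq //.
    by move=> k k'; rewrite !mem_iota /= => h h'; apply: Bk_inj.
  move=> C; rewrite mem_enum; apply/imsetP/mapP.
    move=> [i _ ->]; exists (blk L i); last exact: porbit_cycp.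
    by rewrite mem_iota /= blk_lt // hL.
  move=> [k]; rewrite mem_iota /= => /Bk_ne [j <-] ->.
  by exists j => //; rewrite porbit_cycp.
apply: (perm_trans (perm_map (fun C : {set 'I_t} => #|C|) pe)).
rewrite -map_comp (eq_map (g := nth 0 L)); last by move=> k /=; rewrite card_Bk.
by rewrite -/(mkseq _ _) mkseq_nth.
Qed.
End CycPerm.

Lemma sorted_geq_split (s : seq nat) : sorted geq s ->
  s = [seq k <- s | k != 0] ++ nseq (count (pred1 0) s) 0.
Proof.
elim: s => [//|x s IH] /= hs.
have ss := path_sorted hs.
case: (posnP x) => [x0|xp].
  have tr : transitive geq by move=> a b c /= h1 h2; exact: leq_trans h2 h1.
  subst x; have := order_path_min tr hs => /= a0.
  have : all (pred1 0) s by apply: sub_all a0 => y /=; rewrite leqn0.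
  move/all_pred1P => -> /=.
  rewrite filter_nseq count_nseq /= mul1n /=; by case: (size s).
have xn : (x == 0) = false by case: x xp {hs}.
by rewrite /= -IH.
Qed.

Lemma geq_seq_det (s1 s2 : seq nat) : sorted geq s1 -> sorted geq s2 ->
  size s1 = size s2 -> [seq k <- s1 | k != 0] = [seq k <- s2 | k != 0] -> s1 = s2.
Proof.
move=> h1 h2 hs hf.
rewrite (sorted_geq_split h1) (sorted_geq_split h2) hf.
have c s : count (pred1 0) s = size s - size [seq k <- s | k != 0].
  by rewrite size_filter -(count_predC (pred1 0) s) addnK.
by rewrite !c hs hf.
Qed.

Section Walk.
Variables (T : finType).
Local Open Scope group_scope.

Lemma walk_fwd (s g : {perm T}) :
 (forall j, s j = j -> g j = j) ->
 (forall j, s j != j -> (s j == g j) || (g (s j) == j)) ->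
 (forall j, s j != j -> s (s j) = j -> g j = s j /\ g (s j) = j) ->
 forall j, s j = g j -> forall k, (s ^+ k) j = (g ^+ k) j.
Proof.
move=> H1 H2 H3.
have step y : s y = g y -> s (g y) = g (g y).
  move=> sy; set z := g y.
  have [sz|nz] := eqVneq (s z) z; first by rewrite sz (H1 z sz).
  case/orP: (H2 z nz) => [/eqP //|/eqP e].
  have szy : s z = y by apply: (@perm_inj _ g); rewrite e.
  have nyz : y != z by apply: contraNneq nz => yz; rewrite szy yz.
  have sny : s y != y by rewrite sy eq_sym.
  have ssy : s (s y) = y by rewrite sy -/z szy.
  have [gy gsy] := H3 y sny ssy.
  by rewrite szy -gsy sy.
move=> j sj k.
suff : s ((g ^+ k) j) = g ((g ^+ k) j) /\ (s ^+ k) j = (g ^+ k) j by case.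
elim: k => [|k [IH1 IH2]]; first by rewrite !expg0 !perm1.
rewrite !expgSr !permM IH2; split => //.
exact: step.
Qed.

Lemma eq_porbit_pow (s h : {perm T}) j :
  (forall k, (s ^+ k) j = (h ^+ k) j) -> porbit s j = porbit h j.
Proof.
by move=> e; apply/setP => y; apply/porbitP/porbitP => -[k ->]; exists k; rewrite e.
Qed.

Lemma permV_eq (g : {perm T}) a b : (g^-1 a == b) = (a == g b).
Proof.
by apply/eqP/eqP => [<-|->]; rewrite ?permKV ?permK.
Qed.

Lemma walk (s g : {perm T}) :
 (forall j, s j = j -> g j = j) ->
 (forall j, s j != j -> (s j == g j) || (g (s j) == j)) ->
 (forall j, s j != j -> s (s j) = j -> g j = s j /\ g (s j) = j) ->
 forall j, porbit s j = porbit g j.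
Proof.
move=> H1 H2 H3.
have fwd := walk_fwd H1 H2 H3.
have H1' j : s j = j -> g^-1 j = j.
  by move=> /H1 gj; apply/eqP; rewrite permV_eq gj.
have H2' j : s j != j -> (s j == g^-1 j) || (g^-1 (s j) == j).
  move=> /H2 /orP[e|e]; apply/orP; [right|left]; first by rewrite permV_eq.
  by rewrite eq_sym permV_eq eq_sym.
have H3' j : s j != j -> s (s j) = j -> g^-1 j = s j /\ g^-1 (s j) = j.
  move=> nj ssj; have [e1 e2] := H3 j nj ssj; split; apply/eqP.
    by rewrite permV_eq e2.
  by rewrite permV_eq e1.
have bwd := walk_fwd H1' H2' H3'.
move=> j; have [sj|nj] := eqVneq (s j) j.
  by apply: eq_porbit_pow; apply: fwd; rewrite sj (H1 j sj).
case/orP: (H2 j nj) => [/eqP e|e]; first by apply: eq_porbit_pow; apply: fwd.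
rewrite -(porbitV g); apply: eq_porbit_pow; apply: bwd; apply/eqP.
by rewrite eq_sym permV_eq eq_sym.
Qed.
End Walk.

Local Open Scope classical_set_scope.
Local Open Scope ring_scope.
Lemma tr_idem (F : fieldType) d (X : 'M[F]_d) : X *m X = X -> \tr X = (\rank X)%:R.
Proof.
move=> idem.
have eX := esym (mulmx_base X).
have fc := col_base_full X; have fr := row_base_free X.
move: (\rank X) (col_base X) (row_base X) fc fr eX => n c r fc fr eX.
have [B1 hB1] := row_fullP fc.
have [B2 hB2] := row_freeP fr.
have H := congr1 (fun Y => B1 *m Y *m B2) idem; rewrite /= eX in H.
move: H; rewrite !mulmxA hB1 !mul1mx -mulmxA hB2 mulmx1 => rc.
by rewrite eX mxtrace_mulC rc mxtrace1.
Qed.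

Section Meas.
Variables (R : realType) (d : nat).
Local Notation T := (MxSpace R d).

Lemma entry_mfun (i j : 'I_d) : measurable_fun setT (fun X : T => (X : 'M[R]_d) i j).
Proof.
move=> _ A mA; rewrite setTI; apply: sub_sigma_algebra.
by exists i, j, A.
Qed.

Definition Gfun (X : 'M[R]_d) : R :=
  \sum_i \sum_j ((X i j - X j i) ^+ 2 + ((X *m X) i j - X i j) ^+ 2)
  + (\tr X - 1) ^+ 2.

Lemma Gfun_mfun : measurable_fun setT (fun X : T => Gfun X).
Proof.
rewrite /Gfun.
apply: measurable_realfun.measurable_funD; last first.
  apply: measurable_realfun.measurable_funX; apply: measurable_realfun.measurable_funB; last exact: measurable_cst.
  rewrite /mxtrace; apply: measurable_sum => i; exact: entry_mfun.
apply: measurable_sum => i; apply: measurable_sum => j.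
apply: measurable_realfun.measurable_funD; apply: measurable_realfun.measurable_funX; apply: measurable_realfun.measurable_funB;
  try exact: entry_mfun.
have -> : (fun X : T => ((X : 'M[R]_d) *m X) i j) =
          (fun X : T => \sum_k (X : 'M[R]_d) i k * (X : 'M[R]_d) k j).
  by apply/funext => X; rewrite mxE.
apply: measurable_sum => k; apply: measurable_realfun.measurable_funM; exact: entry_mfun.
Qed.

Lemma Grass1E (X : 'M[R]_d) : @Grass1 R d X <-> Gfun X = 0.
Proof.
rewrite /Gfun; split.
  move=> [sym [idem rk]].
  rewrite tr_idem // rk subrr expr0n /= addr0.
  apply: big1 => i _; apply: big1 => j _.
  have -> : X j i = X i j by rewrite -{1}sym mxE.
  by rewrite idem !subrr expr0n /= addr0.
move/eqP; rewrite paddr_eq0 ?sumr_ge0 // => [/andP[/eqP H1 /eqP H2]||]; last 2 first.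
- by move=> i _; apply: sumr_ge0 => j _; rewrite addr_ge0 // sqr_ge0.
- exact: sqr_ge0.
have {}H1 i j : (X i j - X j i) ^+ 2 + ((X *m X) i j - X i j) ^+ 2 = 0.
  move/eqP: H1; rewrite psumr_eq0 => [/allP /(_ i (mem_index_enum _)) /implyP /(_ isT)|]; last first.
    by move=> k _; apply: sumr_ge0 => l _; rewrite addr_ge0 // sqr_ge0.
  rewrite psumr_eq0 => [/allP /(_ j (mem_index_enum _)) /implyP /(_ isT) /eqP //|].
  by move=> l _; rewrite addr_ge0 // sqr_ge0.
have idem : X *m X = X.
  apply/matrixP => i j; move/eqP: (H1 i j); rewrite paddr_eq0 ?sqr_ge0 //.
  by rewrite !sqrf_eq0 !subr_eq0 => /andP[_ /eqP].
split; [|split] => //.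
- apply/matrixP => i j; move/eqP: (H1 j i); rewrite paddr_eq0 ?sqr_ge0 //.
  rewrite !sqrf_eq0 subr_eq0 => /andP[/eqP e _]; rewrite mxE e; reflexivity.
- move/eqP: H2; rewrite sqrf_eq0 subr_eq0 tr_idem // pnatr_eq1 => /eqP; exact.
Qed.
End Meas.

Section Integ.
Variables (R : realType) (d : nat).
Local Notation T := (MxSpace R d).

Lemma Grass1_meas : measurable (@Grass1 R d : set T).
Proof.
have -> : (@Grass1 R d : set T) = (fun X : T => Gfun X) @^-1` [set 0].
  by apply/seteqP; split => X /Grass1E.
have := @Gfun_mfun R d measurableT _ (measurable_set1 0); rewrite setTI; exact.
Qed.

Lemma mu1_one (t : nat) (sigma : probability T R) : sigma (@Grass1 R d) = 1%E ->
  mu1 sigma (fun _ : 'I_t => 1%:M) = 1%E.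
Proof.
move=> s1; rewrite /mu1.
rewrite (eq_integral (cst 1%E)); last first.
  move=> X; rewrite inE => GX /=.
  have trX : \tr (X : 'M[R]_d) = 1.
    by case: GX => _ [idem rk]; rewrite (tr_idem idem) rk.
  by rewrite /hs_inner mulmx1 trX big1.
rewrite integral_cst; last exact: Grass1_meas.
by rewrite mul1e; exact: s1.
Qed.
End Integ.

Section Emx.
Variables (R : realType) (d : nat).
Implicit Types (a b c e : 'I_d) (X : 'M[R]_d).

Definition emx a b : 'M[R]_d := delta_mx a b + delta_mx b a.

Lemma delta_fact a b : delta_mx a b = delta_mx a (0 : 'I_1) *m delta_mx 0 b :> 'M[R]_d.
Proof. by rewrite mul_delta_mx. Qed.

Lemma tr_delta a b : \tr (delta_mx a b : 'M[R]_d) = (a == b)%:R.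
Proof.
rewrite delta_fact mxtrace_mulC mul_delta_mx_cond trace_mx11 mulmxnE mxE eqxx /=.
by rewrite eq_sym; case: (a == b).
Qed.

Lemma tr_mul_delta X a b : \tr (X *m delta_mx a b) = X b a.
Proof.
rewrite delta_fact mulmxA mxtrace_mulC mulmxA -rowE -colE trace_mx11 !mxE.
by [].
Qed.

Lemma hs_emx X a b : hs_inner X (emx a b) = X b a + X a b.
Proof. by rewrite /hs_inner /emx mulmxDr mxtraceD !tr_mul_delta. Qed.

Lemma emx_sym a b : (emx a b)^T = emx a b.
Proof. by rewrite /emx linearD /= !trmx_delta addrC. Qed.

Lemma emx_mul a b c e : emx a b *m emx c e =
  delta_mx a e *+ (b == c) + delta_mx a c *+ (b == e)
  + (delta_mx b e *+ (a == c) + delta_mx b c *+ (a == e)).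
Proof.
by rewrite /emx mulmxDl !mulmxDr !mul_delta_mx_cond.
Qed.

Lemma emx_mul_neq0 a b c e : emx a b *m emx c e != 0 ->
  [|| b == c, b == e, a == c | a == e].
Proof.
apply: contraR; rewrite !negb_or => /and4P[/negbTE h1 /negbTE h2 /negbTE h3 /negbTE h4].
by rewrite emx_mul h1 h2 h3 h4 !mulr0n !addr0.
Qed.

Lemma tr_emx_mul_neq0 a b c e : \tr (emx a b *m emx c e) != 0 ->
  ((b == c) && (a == e)) || ((b == e) && (a == c)).
Proof.
rewrite emx_mul !mxtraceD !raddfMn /= (tr_delta a e) (tr_delta a c) (tr_delta b e) (tr_delta b c).
by case: (b == c); case: (a == e); case: (b == e); case: (a == c);
  rewrite ?mulr0n ?addr0 ?eqxx.
Qed.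

Lemma tr_emx_neq0 a b : \tr (emx a b) != 0 -> a == b.
Proof.
rewrite /emx mxtraceD (tr_delta a b) (tr_delta b a) [b == a]eq_sym; case: (a == b) => //.
by rewrite addr0 eqxx.
Qed.

Definition nnmx (A : 'M[R]_d) := forall i j, 0 <= A i j.

Lemma nn_emx a b : nnmx (emx a b).
Proof. by move=> i j; rewrite /emx !mxE addr_ge0. Qed.

Lemma nn_mul A B : nnmx A -> nnmx B -> nnmx (A *m B).
Proof. by move=> hA hB i j; rewrite mxE; apply: sumr_ge0 => k _; rewrite mulr_ge0. Qed.

Lemma nn_one : nnmx 1%:M.
Proof. by move=> i j; rewrite mxE ler0n. Qed.

Lemma nn_prod n (F : 'I_n -> 'M[R]_d) : (forall k, nnmx (F k)) -> nnmx (\prod_(k < n) F k).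
Proof.
move=> hF; apply: (big_ind nnmx) => //; first exact: nn_one.
by move=> A B hA hB; rewrite -mulmxE; apply: nn_mul.
Qed.

Lemma tr_nn A : nnmx A -> 0 <= \tr A.
Proof. by move=> h; apply: sumr_ge0 => i _. Qed.

Lemma prod_entry_ge n (F : nat -> 'M[R]_d) (v : nat -> 'I_d) :
  (forall k, nnmx (F k)) -> (forall k, 1 <= F k (v k) (v k.+1)) ->
  1 <= (\prod_(k < n) F k) (v 0) (v n).
Proof.
move=> hF hv; elim: n => [|n IH]; first by rewrite big_ord0 mxE eqxx.
rewrite big_ord_recr /= -mulmxE mxE (bigD1 (v n)) //=.
rewrite -[X in X <= _]addr0; apply: lerD.
  exact: mulr_ege1.
apply: sumr_ge0 => w _; apply: mulr_ge0; last exact: hF.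
rewrite mulmxE; apply: nn_prod => k; exact: hF.
Qed.
End Emx.

Section Cyc.
Variables (R : realType) (d t : nat).

Lemma card_porbit1 (s : 'S_t) j : s j = j -> #|porbit s j| = 1%N.
Proof.
move=> sj; have -> : porbit s j = [set j]%SET.
  apply/setP => y; rewrite inE; apply/porbitP/eqP => [[k ->]|->].
    elim: k => [|k IH]; first by rewrite expg0 perm1.
    by rewrite expgSr permM IH sj.
  by exists 0%N; rewrite expg0 perm1.
by rewrite cards1.
Qed.

Lemma porbit_ge2 (s : 'S_t) j : s j != j -> (1 < #|porbit s j|)%N.
Proof.
move=> nj; have := card_porbit_neq0 s j; have := iter_porbit s j.
case: #|porbit s j| => [|[|n]] //= h _.
by rewrite h eqxx in nj.
Qed.

Lemma porbit_2 (s : 'S_t) j : s j != j -> s (s j) = j -> #|porbit s j| = 2%N.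
Proof.
move=> nj ssj; have u := uniq_traject_porbit s j; have := porbit_ge2 nj.
case: #|porbit s j| u => [|[|[|n]]] //= u _.
by move: u; rewrite ssj !inE eqxx orbT.
Qed.

Lemma tr_rot n (F : nat -> 'M[R]_d) : F n = F 0 ->
  \tr (\prod_(k < n) F k) = \tr (\prod_(k < n) F k.+1).
Proof.
case: n => [|n] e; first by rewrite !big_ord0.
rewrite big_ord_recl big_ord_recr /= e -!mulmxE mxtrace_mulC.
by [].
Qed.

Lemma cyc_tr (M : 'I_t -> 'M[R]_d) (s : 'S_t) j :
  \tr (cycle_mx M s (porbit s j)) = \tr (\prod_(k < #|porbit s j|) M ((s ^+ k)%g j)).
Proof.
rewrite /cycle_mx; case: pickP => [x xC|none]; last first.
  by have := none j; rewrite porbit_id.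
have ex : porbit s x = porbit s j by apply/eqP; rewrite eq_porbit_mem.
rewrite -ex; move: xC; rewrite porbit_sym => /porbitP [m ->].
set n := #|porbit s x|.
elim: m => [|m IH]; first by rewrite expg0 perm1.
rewrite IH (@tr_rot n (fun k : nat => M ((s ^+ k)%g ((s ^+ m)%g x)))).
  apply: congr1; apply: eq_bigr => k _ /=.
  by rewrite expgS permM expgSr permM.
have hy : (s ^+ n)%g ((s ^+ m)%g x) = (s ^+ m)%g x.
  by rewrite /n -(porbit_perm s m x) permX; exact: iter_porbit.
by rewrite /= hy expg0 perm1.
Qed.
End Cyc.

Local Open Scope classical_set_scope.
Local Open Scope ring_scope.


Lemma rank1_fact (R : realType) d (X : 'M[R]_d) : \rank X = 1%N ->
  exists (c : 'cV[R]_d) (r : 'rV[R]_d), X = c *m r.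
Proof.
move=> rk; have := mulmx_base X; move: (col_base X) (row_base X).
rewrite rk => c r <-; by exists c, r.
Qed.

Section Main.
Variables (R : realType) (t d : nat) (hdt : (t <= d)%N).

Definition io (j : 'I_t) : 'I_d := widen_ord hdt j.

Definition Msig (g : 'S_t) : 'I_t -> 'M[R]_d := fun j => @emx R d (io j) (io (g j)).

Definition Pi (M : 'I_t -> 'M[R]_d) (s : 'S_t) :=
  \prod_(C in porbits s) \tr (cycle_mx M s C).

Lemma io_eq a b : (io a == io b) = (a == b).
Proof. apply/eqP/eqP => [e|->] //; apply: val_inj; exact: (congr1 val e). Qed.

Lemma nn_cycle g s C : nnmx (cycle_mx (Msig g) s C).
Proof.
rewrite /cycle_mx; case: pickP => [x _|_]; last exact: nn_one.
by apply: nn_prod => k; apply: nn_emx.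
Qed.

Lemma Pi_nn g s : 0 <= Pi (Msig g) s.
Proof. by apply: prodr_ge0 => C _; apply: tr_nn; apply: nn_cycle. Qed.

Lemma Pi_ge1 g : 1 <= Pi (Msig g) g.
Proof.
apply: (big_ind (fun x : R => 1 <= x)) => //; first by move=> x y; apply: mulr_ege1.
move=> C /imsetP [j _ ->]; rewrite cyc_tr.
set n := #|porbit g j|.
pose F := fun k : nat => Msig g ((g ^+ k)%g j).
pose v := fun k : nat => io ((g ^+ k)%g j).
have hn : v n = v 0%N.
  by rewrite /v expg0 perm1 /n permX iter_porbit.
have := @prod_entry_ge R d n F v.
rewrite hn => h.
apply: le_trans (h _ _) _.
- by move=> k; apply: nn_emx.
- move=> k; rewrite /F /v /Msig expgSr permM /emx !mxE !eqxx /=.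
  by rewrite ler_wpDr // ler0n.
rewrite /mxtrace (bigD1 (v 0%N)) //= ler_wpDr //.
  by apply: sumr_ge0 => i _; apply: nn_prod => k; apply: nn_emx.
Qed.

Lemma Pi_neq0_porbits g s : Pi (Msig g) s != 0 -> forall j, porbit s j = porbit g j.
Proof.
move=> /prodf_neq0 h.
have hj j : \tr (\prod_(k < #|porbit s j|) Msig g ((s ^+ k)%g j)) != 0.
  by rewrite -cyc_tr; apply: h; apply: imset_f.
apply: walk.
- move=> j sj; have := hj j; rewrite card_porbit1 // big_ord1 expg0 perm1.
  by move/tr_emx_neq0; rewrite io_eq => /eqP <-.
- move=> j nj; have := hj j; have := porbit_ge2 nj.
  case: #|porbit s j| => [|[|n]] // _.
  rewrite big_ord_recl big_ord_recl /= => h2.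
  have : Msig g j *m Msig g (s j) != 0.
    apply: contraNneq h2 => e.
    by rewrite mulrA expg0 perm1 expg1 -mulmxE e mul0mx mxtrace0.
  move/emx_mul_neq0; rewrite !io_eq.
  case/or4P => [e|e|e|e].
  + by rewrite eq_sym e.
  + by move: e; rewrite (inj_eq perm_inj) eq_sym (negbTE nj).
  + by move: e; rewrite eq_sym (negbTE nj).
  + by apply/orP; right; rewrite eq_sym.
- move=> j nj ssj; have := hj j; rewrite porbit_2 // big_ord_recl big_ord1 /=.
  rewrite expg0 perm1 expg1 -mulmxE => /tr_emx_mul_neq0; rewrite !io_eq.
  case/orP => /andP [e1 e2].
    by split; apply/eqP; rewrite // eq_sym.
  by move: e2; rewrite eq_sym (negbTE nj).
Qed.

Lemma cts_eq (g s : 'S_t) (p : partition_of t) : (forall j, porbit s j = porbit g j) ->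
  cycle_type_is s p = cycle_type_is g p.
Proof.
move=> h; have e : porbits s = porbits g by apply: eq_imset.
by rewrite /cycle_type_is /cycle_lengths e.
Qed.

Lemma partn_sorted (q : partition_of t) : sorted geq (partn_seq q).
Proof. by case: q => x hx; rewrite /partn_seq /=; case/andP: hx. Qed.

Lemma partn_size (q : partition_of t) : size (partn_seq q) = t.
Proof. by rewrite size_map size_tuple. Qed.

Lemma partn_sum (q : partition_of t) : sumn (partn_seq q) = t.
Proof. by case: q => x hx; rewrite /partn_seq /=; case/andP: hx => _ /eqP. Qed.

Lemma cts_uniq (g : 'S_t) (p p' : partition_of t) :
  cycle_type_is g p -> cycle_type_is g p' -> p = p'.
Proof.
rewrite /cycle_type_is => /eqP h /eqP h'.
have e : partn_seq p = partn_seq p'.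
  by apply: geq_seq_det; rewrite ?partn_sorted ?partn_size ?h ?h'.
apply: val_inj; apply: val_inj; apply: (inj_map val_inj); exact: e.
Qed.

Lemma sumn_filter0 (s : seq nat) : sumn [seq k <- s | k != 0%N] = sumn s.
Proof. by elim: s => //= x s IH; case: eqP => [->|_] /=; rewrite IH. Qed.

Lemma geq_total : total geq. Proof. by move=> a b; apply: leq_total. Qed.
Lemma geq_tr : transitive geq. Proof. by move=> a b c /= h1 h2; exact: leq_trans h2 h1. Qed.
Lemma geq_anti : antisymmetric geq.
Proof. by move=> a b /andP [h1 h2]; apply/eqP; rewrite eqn_leq; apply/andP; split. Qed.

Lemma cts_exists (p : partition_of t) : exists g : 'S_t, cycle_type_is g p.
Proof.
set L := [seq k <- partn_seq p | k != 0%N].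
have hL : sumn L = t by rewrite sumn_filter0 partn_sum.
have hpos : all (fun l => 0 < l)%N L.
  by apply/allP => x; rewrite mem_filter lt0n => /andP [].
exists (cycp hL); rewrite /cycle_type_is /cycle_lengths; apply/eqP.
have sL : sorted geq L by apply: sorted_filter; [exact: geq_tr | exact: partn_sorted].
transitivity (sort geq L); first by rewrite (sorted_sort geq_tr sL).
apply/(perm_sortP geq_total geq_tr geq_anti).
by rewrite perm_sym; apply: cycp_type.
Qed.

Definition RHSf (alpha : partition_of t -> R) (M : 'I_t -> 'M[R]_d) :=
  \sum_(p : partition_of t) alpha p *
        \sum_(s : 'S_t | cycle_type_is s p)
           \prod_(C in porbits s) \tr (cycle_mx M s C).

Lemma RHS_sig alpha g p : cycle_type_is g p ->
  RHSf alpha (Msig g) = alpha p * \sum_(s : 'S_t) Pi (Msig g) s.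
Proof.
move=> hg.
have inner p' : \sum_(s : 'S_t | cycle_type_is s p') Pi (Msig g) s =
    (cycle_type_is g p')%:R * \sum_(s : 'S_t) Pi (Msig g) s.
  rewrite big_mkcond mulr_sumr; apply: eq_bigr => s _.
  have [->|nz] := eqVneq (Pi (Msig g) s) 0; first by rewrite mulr0; case: ifP.
  rewrite (cts_eq p' (Pi_neq0_porbits nz)).
  by case: (cycle_type_is g p'); rewrite ?mul1r ?mul0r.
have K := inner p; have K' := inner; rewrite /Pi in K K'.
rewrite /RHSf (bigD1 p) //= [X in _ + X]big1 ?addr0; last first.
  move=> p' np'; rewrite K'.
  case: (boolP (cycle_type_is g p')) => h; last by rewrite mul0r mulr0.
  by move: np'; rewrite (cts_uniq h hg) eqxx.
by rewrite K hg mul1r.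
Qed.

Lemma c_nn (p : partition_of t) :
  0 <= \sum_(s : 'S_t | cycle_type_is s p)
           \prod_(C in porbits s) \tr (cycle_mx (fun _ : 'I_t => (1%:M : 'M[R]_d)) s C).
Proof.
apply: sumr_ge0 => s _; apply: prodr_ge0 => C _; apply: tr_nn.
rewrite /cycle_mx; case: pickP => [x _|_]; last exact: nn_one.
by apply: nn_prod => k; apply: nn_one.
Qed.

Lemma integrand_sig (X : 'M[R]_d) (h : 'S_t) : @Grass1 R d X ->
  \prod_(i < t) hs_inner X (Msig h i) = \prod_(i < t) hs_inner X (Msig 1 i).
Proof.
move=> [sym [idem rk]]; have [c [r eX]] := rank1_fact rk.
have e (a b : 'I_d) : hs_inner X (@emx R d a b) = (2 * c a 0) * r 0 b.
  rewrite hs_emx; have -> : X b a = X a b by rewrite -{1}sym mxE.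
  by rewrite eX mxE big_ord1 -mulrA mulr_natl mulr2n.
have H (k : 'S_t) : \prod_(i < t) hs_inner X (Msig k i) =
    \prod_(i < t) (2 * c (io i) 0) * \prod_(i < t) r 0 (io i).
  rewrite /Msig; under eq_bigr => i _ do rewrite e.
  rewrite big_split /=; congr (_ * _).
  by rewrite [RHS](reindex_inj (@perm_inj _ k)).
by rewrite !H.
Qed.

Lemma mu1_sig (sigma : probability (MxSpace R d) R) g :
  mu1 sigma (Msig g) = mu1 sigma (Msig 1).
Proof.
rewrite /mu1; apply: eq_integral => X; rewrite inE => GX.
by rewrite (integrand_sig g GX).
Qed.
End Main.

Theorem proposition3p3 (R : realType) (t d : nat)
    (sigma : probability (MxSpace R d) R) :
  (t <= d)%N ->
  sigma (@Grass1 R d) = 1%E ->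
  orth_invariant sigma ->
  forall alpha : partition_of t -> R,
  (forall M : 'I_t -> 'M[R]_d, (forall i, symmetric_mx (M i)) ->
     mu1 sigma M =
     (\sum_(p : partition_of t) alpha p *
        \sum_(s : 'S_t | cycle_type_is s p)
           \prod_(C in porbits s) \tr (cycle_mx M s C))%:E) ->
  forall p : partition_of t, 0 < alpha p.
Proof.
move=> hdt s1 _ alpha hyp.
have hM g : mu1 sigma (@Msig R t d hdt g) = (RHSf alpha (@Msig R t d hdt g))%:E.
  by apply: hyp => i; apply: emx_sym.
set J := RHSf alpha (@Msig R t d hdt 1).
have hJ q g : cycle_type_is g q ->
    alpha q * \sum_(s : 'S_t) Pi (@Msig R t d hdt g) s = J.
  move=> hg; rewrite -(@RHS_sig R t d hdt alpha g q hg).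
  by have := hM g; rewrite mu1_sig hM; case=> e; rewrite /J e.
have Kpos g : 0 < \sum_(s : 'S_t) Pi (@Msig R t d hdt g) s.
  rewrite (bigD1 g) //=; apply: (lt_le_trans ltr01).
  rewrite -[X in X <= _]addr0; apply: lerD; first exact: Pi_ge1.
  by apply: sumr_ge0 => s _; apply: Pi_nn.
have h1 : RHSf alpha (fun _ : 'I_t => (1%:M : 'M[R]_d)) = 1.
  have := hyp (fun _ => 1%:M) (fun _ => trmx1 _ _).
  by rewrite mu1_one // => -[].
have Jpos : 0 < J.
  rewrite ltNge; apply/negP => J0.
  have : RHSf alpha (fun _ : 'I_t => (1%:M : 'M[R]_d)) <= 0.
    apply: sumr_le0 => q _; apply: mulr_le0_ge0; last exact: c_nn.
    have [g hg] := cts_exists q.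
    by rewrite -(pmulr_lle0 _ (Kpos g)) (hJ q g hg).
  by rewrite h1 ler10.
move=> p; have [g hg] := cts_exists p.
by rewrite -(pmulr_lgt0 _ (Kpos g)) (hJ p g hg).
Qed.
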